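(* Let $\mu,\nu,\rho$ be nonnegative integers with $2\rho\le\nu-1$. For integers $m,n$ put $m'=m+q^{\mu-\rho}$ and $n'=n+q^\rho$. Then $$\#\big\{(m,n)\in\mathbb{Z}^2:\ q^{\mu-1}\le m<q^\mu,\ q^{\nu-1}\le n<q^\nu,\ T_q(mn)\ne T_q(m'n')\big\}\ll\log(q^{\mu+\nu})\,q^{\mu+\nu-\rho}.$$
   Context: $q\ge2$ is a fixed integer; for real $x>0$, $T_q(x)=\lfloor\log x/\log q\rfloor$. The implied constant depends at most on $q$. *)

(* Defs.v *)
From Stdlib Require Import Reals Lra Lia ZArith Arith List.
Open Scope R_scope.

Definition Tq (q : nat) (x : R) : Z := Int_part (ln x / ln (INR q)).

(* Exponents are integers (powerRZ), so q^(mu-1), q^(mu-rho) may be fractional. *)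
Definition bad (q mu nu rho : nat) (m n : nat) : bool :=
  let Q := INR q in
  let M := INR m in
  let N := INR n in
  let M' := M + powerRZ Q (Z.of_nat mu - Z.of_nat rho) in
  let N' := N + powerRZ Q (Z.of_nat rho) in
  if Rle_dec (powerRZ Q (Z.of_nat mu - 1)) M then
  if Rlt_dec M (Q ^ mu) then
  if Rle_dec (powerRZ Q (Z.of_nat nu - 1)) N then
  if Rlt_dec N (Q ^ nu) then
  if Z.eq_dec (Tq q (M * N)) (Tq q (M' * N')) then false else true
  else false else false else false else false.

(* Number of pairs (m,n) in Z^2 with the property; any such pair has
   0 < m < q^mu and 0 < n < q^nu, so enumerating 0..q^mu-1, 0..q^nu-1 suffices. *)
Definition badcount (q mu nu rho : nat) : nat :=
  length (filter (fun p => bad q mu nu rho (fst p) (snd p))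
                 (list_prod (seq 0 (q ^ mu)) (seq 0 (q ^ nu)))).

(* Main.v *)
Require Import Defs.
From Stdlib Require Import Reals Lra Lia ZArith Arith List.
Open Scope R_scope.

Lemma exp_le_mono a b : a <= b -> exp a <= exp b.
Proof. intros [H|H]; [left; apply exp_increasing; exact H| subst; lra]. Qed.

Lemma ln_le_mono a b : 0 < a -> a <= b -> ln a <= ln b.
Proof. intros Ha [H|H]; [left; apply ln_increasing; auto| subst; lra]. Qed.

Lemma pw_exp Q z : 0 < Q -> powerRZ Q z = exp (IZR z * ln Q).
Proof. intros; rewrite powerRZ_Rpower; auto. Qed.

Lemma pw_mono Q a b : 1 <= Q -> (a <= b)%Z -> powerRZ Q a <= powerRZ Q b.
Proof. intros HQ Hab. rewrite !pw_exp by lra. apply exp_le_mono.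
  apply Rmult_le_compat_r. rewrite <- ln_1. apply ln_le_mono; lra.
  apply IZR_le; auto. Qed.

Lemma Tq_jump q x y : (2 <= q)%nat -> 0 < x -> x <= y -> Tq q x <> Tq q y ->
  exists k, x < powerRZ (INR q) k /\ powerRZ (INR q) k <= y.
Proof.
  intros hq hx hxy hne. unfold Tq in *.
  assert (HQ : 2 <= INR q) by (replace 2 with (INR 2) by (simpl; lra); apply le_INR; auto).
  set (L := ln (INR q)).
  assert (HL : 0 < L) by (unfold L; rewrite <- ln_1; apply ln_increasing; lra).
  set (u := ln x / L). set (v := ln y / L).
  assert (Hu : ln x = u * L) by (unfold u; field; lra).
  assert (Hv : ln y = v * L) by (unfold v; field; lra).
  assert (Huv : u <= v).
  { apply Rmult_le_reg_r with L; auto. rewrite <- Hu, <- Hv. apply ln_le_mono; auto. }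
  change (Int_part u <> Int_part v) in hne.
  destruct (base_Int_part u) as [t1 t2]. destruct (base_Int_part v) as [s1 s2].
  set (t := Int_part u) in *. set (s := Int_part v) in *.
  assert (ts : (t < s + 1)%Z) by (apply lt_IZR; rewrite plus_IZR; simpl; lra).
  assert (ts' : (t + 1 <= s)%Z) by lia.
  exists (t+1)%Z. rewrite pw_exp by lra. fold L. split.
  - rewrite <- (exp_ln x) by auto. apply exp_increasing. rewrite Hu.
    apply Rmult_lt_compat_r; auto. rewrite plus_IZR; simpl; lra.
  - rewrite <- (exp_ln y) by lra. apply exp_le_mono. rewrite Hv.
    apply Rmult_le_compat_r; [lra|]. apply IZR_le in ts'. lra.
Qed.

Lemma cnt_int (P : nat -> bool) lo hi : (forall n, P n = true -> lo <= INR n < hi) ->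
  forall N s, INR (length (filter P (seq s N))) <= Rmax 0 (hi - Rmax lo (INR s) + 1).
Proof.
  intros HP N. induction N as [|N IH]; intros s.
  - simpl. apply Rmax_l.
  - simpl. specialize (IH (S s)). rewrite S_INR in IH.
    destruct (P s) eqn:E.
    + destruct (HP s E) as [h1 h2]. simpl length. rewrite S_INR.
      revert IH. unfold Rmax; repeat destruct Rle_dec; intros; lra.
    + revert IH. unfold Rmax; repeat destruct Rle_dec; intros; lra.
Qed.

Lemma cnt_int0 (P : nat -> bool) lo hi N : lo <= hi + 1 -> (forall n, P n = true -> lo <= INR n < hi) ->
  INR (length (filter P (seq 0 N))) <= hi - lo + 1.
Proof.
  intros H HP. pose proof (cnt_int P lo hi HP N 0). simpl INR in H0.
  revert H0. unfold Rmax; repeat destruct Rle_dec; intros; lra.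
Qed.

Lemma filt3 (P P1 P2 P3 : nat -> bool) l :
  (forall n, P n = true -> P1 n = true \/ P2 n = true \/ P3 n = true) ->
  (length (filter P l) <= length (filter P1 l) + length (filter P2 l) + length (filter P3 l))%nat.
Proof.
  intros H. induction l as [|a l IH]; simpl; auto.
  destruct (P a) eqn:E.
  - destruct (H a E) as [h|[h|h]]; rewrite h; simpl;
    destruct (P1 a), (P2 a), (P3 a); simpl; lia.
  - destruct (P1 a), (P2 a), (P3 a); simpl; lia.
Qed.

Lemma prod_bound (f : nat * nat -> bool) l1 l2 B :
  (forall m, INR (length (filter (fun n => f (m,n)) l2)) <= B) ->
  INR (length (filter f (list_prod l1 l2))) <= INR (length l1) * B.
Proof.
  intros H. induction l1 as [|a l1 IH]; simpl.
  - lra.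
  - rewrite filter_app, length_app, plus_INR. change (match length l1 with 0%nat => 1 | S _ => INR (length l1) + 1 end) with (INR (S (length l1))). rewrite S_INR.
    assert (E : forall l, length (filter f (map (fun y => (a,y)) l)) = length (filter (fun n => f (a,n)) l)).
    { induction l as [|b l IHl]; simpl; auto. destruct (f (a,b)); simpl; auto. }
    rewrite E. specialize (H a). lra.
Qed.

Lemma filt_none (P : nat -> bool) l : (forall n, P n = false) -> length (filter P l) = 0%nat.
Proof. intros H; induction l; simpl; auto. rewrite H; auto. Qed.

Definition Dq (q mu nu rho : nat) : R :=
  let Q := INR q in
  powerRZ Q (Z.of_nat mu - Z.of_nat rho) * powerRZ Q (Z.of_nat nu)
  + powerRZ Q (Z.of_nat rho) * powerRZ Q (Z.of_nat mu)
  + powerRZ Q (Z.of_nat mu - Z.of_nat rho) * powerRZ Q (Z.of_nat rho).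

Lemma INRq2 q : (2 <= q)%nat -> 2 <= INR q.
Proof. intros; replace 2 with (INR 2) by (simpl; lra); apply le_INR; auto. Qed.

Lemma pw_mul Q a b : 0 < Q -> powerRZ Q a * powerRZ Q b = powerRZ Q (a+b).
Proof. intros; rewrite powerRZ_add; lra. Qed.

Lemma bad_int q mu nu rho m n : (2 <= q)%nat -> (2 * Z.of_nat rho <= Z.of_nat nu - 1)%Z -> bad q mu nu rho m n = true ->
  (powerRZ (INR q) (Z.of_nat mu - 1) <= INR m < powerRZ (INR q) (Z.of_nat mu)) /\
  exists k, (k = Z.of_nat mu + Z.of_nat nu - 1 \/ k = Z.of_nat mu + Z.of_nat nu
             \/ k = Z.of_nat mu + Z.of_nat nu + 1)%Z /\
   INR m * INR n < powerRZ (INR q) k /\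
   powerRZ (INR q) k - Dq q mu nu rho <= INR m * INR n.
Proof.
  intros hq hr H. unfold bad in H.
  pose proof (INRq2 q hq) as HQ. set (Q := INR q) in *.
  set (M := INR m) in *. set (N := INR n) in *.
  set (zm := Z.of_nat mu) in *. set (zn := Z.of_nat nu) in *. set (zr := Z.of_nat rho) in *.
  set (a := powerRZ Q (zm - zr)) in *. set (b := powerRZ Q zr) in *.
  destruct (Rle_dec (powerRZ Q (zm - 1)) M) as [h1|]; [|discriminate].
  destruct (Rlt_dec M (Q ^ mu)) as [h2|]; [|discriminate].
  destruct (Rle_dec (powerRZ Q (zn - 1)) N) as [h3|]; [|discriminate].
  destruct (Rlt_dec N (Q ^ nu)) as [h4|]; [|discriminate].
  destruct (Z.eq_dec (Tq q (M * N)) (Tq q ((M + a) * (N + b)))) as [|hne]; [discriminate|].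
  rewrite pow_powerRZ in h2, h4. fold zm in h2. fold zn in h4.
  set (A := powerRZ Q zm) in *. set (Bn := powerRZ Q zn) in *.
  assert (Q0 : 0 < Q) by lra.
  assert (ha : 0 < a) by (apply powerRZ_lt; lra).
  assert (hb : 0 < b) by (apply powerRZ_lt; lra).
  assert (hM : 0 < M) by (pose proof (powerRZ_lt Q (zm-1)%Z Q0); lra).
  assert (hN : 0 < N) by (pose proof (powerRZ_lt Q (zn-1)%Z Q0); lra).
  split; [lra|].
  destruct (Tq_jump q (M*N) ((M+a)*(N+b)) hq) as [k [k1 k2]]; auto.
  { apply Rmult_lt_0_compat; auto. }
  { nra. }
  fold Q in k1, k2. exists k. split; [|split; [auto|]].
  - assert (kl : (zm + zn - 2 < k)%Z).
    { destruct (Z_lt_le_dec (zm + zn - 2) k) as [|hk]; auto. exfalso.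
      pose proof (pw_mono Q k (zm + zn - 2) ltac:(lra) hk).
      replace (zm + zn - 2)%Z with ((zm - 1) + (zn - 1))%Z in H0 by lia.
      rewrite <- pw_mul in H0 by lra.
      assert (powerRZ Q (zm - 1) * powerRZ Q (zn - 1) <= M * N).
      { apply Rmult_le_compat; auto; left; apply powerRZ_lt; lra. }
      lra. }
    assert (ku : (k < zm + zn + 2)%Z).
    { destruct (Z_lt_le_dec k (zm + zn + 2)) as [|hk]; auto. exfalso.
      pose proof (pw_mono Q (zm + zn + 2) k ltac:(lra) hk).
      rewrite <- !pw_mul in H0 by lra.
      assert (a <= A) by (unfold a, A; apply pw_mono; [lra|]; unfold zr; lia).
      assert (b <= Bn) by (unfold b, Bn; apply pw_mono; [lra|]; lia).
      assert (E2 : powerRZ Q 2 = Q * Q) by (simpl; ring).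
      change (powerRZ Q zm) with A in H0. change (powerRZ Q zn) with Bn in H0. rewrite E2 in H0.
      assert ((M+a)*(N+b) < (2*A)*(2*Bn)).
      { apply Rmult_le_0_lt_compat; lra. }
      assert (0 < A * Bn) by (apply Rmult_lt_0_compat; lra).
      assert (4*(A*Bn) <= (Q*Q)*(A*Bn)) by (apply Rmult_le_compat_r; nra).
      lra. }
    lia.
  - assert (Hy : (M+a)*(N+b) <= M*N + a*Bn + b*A + a*b).
    { assert (a * N <= a * Bn) by (apply Rmult_le_compat_l; lra).
      assert (b * M <= b * A) by (apply Rmult_le_compat_l; lra). nra. }
    unfold Dq. fold Q zm zn zr a b A Bn. lra.
Qed.

Definition inI (lo hi : R) (n : nat) : bool :=
  if Rle_dec lo (INR n) then if Rlt_dec (INR n) hi then true else false else false.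

Lemma inI_spec lo hi n : inI lo hi n = true <-> lo <= INR n < hi.
Proof. unfold inI; destruct (Rle_dec lo (INR n)), (Rlt_dec (INR n) hi); split; intros; try lra; try discriminate; auto. Qed.

Lemma Dq_nonneg q mu nu rho : (2 <= q)%nat -> 0 <= Dq q mu nu rho.
Proof. intros hq. pose proof (INRq2 q hq). unfold Dq.
  assert (forall z, 0 < powerRZ (INR q) z) by (intros; apply powerRZ_lt; lra).
  pose proof (H0 (Z.of_nat mu - Z.of_nat rho)%Z). pose proof (H0 (Z.of_nat nu)).
  pose proof (H0 (Z.of_nat rho)). pose proof (H0 (Z.of_nat mu)).
  nra. Qed.

Lemma per_m q mu nu rho m N : (2 <= q)%nat -> (2 * Z.of_nat rho <= Z.of_nat nu - 1)%Z ->
  INR (length (filter (fun n => bad q mu nu rho m n) (seq 0 N))) <=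
  3 * (Dq q mu nu rho * INR q / powerRZ (INR q) (Z.of_nat mu) + 1).
Proof.
  intros hq hr. pose proof (INRq2 q hq) as HQ.
  set (Q := INR q) in *. set (D := Dq q mu nu rho).
  assert (HD : 0 <= D) by (apply Dq_nonneg; auto).
  assert (HA : 0 < powerRZ Q (Z.of_nat mu)) by (apply powerRZ_lt; lra).
  assert (RHS0 : 0 <= 3 * (D * Q / powerRZ Q (Z.of_nat mu) + 1)).
  { assert (0 <= D * Q / powerRZ Q (Z.of_nat mu)).
    { unfold Rdiv. apply Rmult_le_pos; [nra|]. left; apply Rinv_0_lt_compat; auto. }
    lra. }
  destruct (Rle_dec (powerRZ Q (Z.of_nat mu - 1)) (INR m)) as [h1|h1];
  [destruct (Rlt_dec (INR m) (powerRZ Q (Z.of_nat mu))) as [h2|h2]|].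
  2,3: rewrite filt_none; [simpl; lra|]; intros n; destruct (bad q mu nu rho m n) eqn:E; auto;
       destruct (bad_int q mu nu rho m n hq hr E) as [[e1 e2] _]; fold Q in e1, e2; lra.
  set (M := INR m) in *.
  assert (hM : 0 < M) by (pose proof (powerRZ_lt Q (Z.of_nat mu - 1)%Z ltac:(lra)); lra).
  set (k0 := (Z.of_nat mu + Z.of_nat nu)%Z).
  assert (cnt : forall K, INR (length (filter (inI ((K - D)/M) (K/M)) (seq 0 N))) <= D/M + 1).
  { intros K. replace (D/M+1) with (K/M - (K-D)/M + 1) by (field; lra).
    apply cnt_int0.
    - assert ((K-D)/M <= K/M). { unfold Rdiv. apply Rmult_le_compat_r. left; apply Rinv_0_lt_compat; auto. lra. } lra.
    - intros n Hn. apply inI_spec; auto. }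
  eapply Rle_trans.
  { apply le_INR. apply (filt3 _ (inI ((powerRZ Q (k0-1) - D)/M) (powerRZ Q (k0-1)/M))
                                  (inI ((powerRZ Q k0 - D)/M) (powerRZ Q k0/M))
                                  (inI ((powerRZ Q (k0+1) - D)/M) (powerRZ Q (k0+1)/M))).
    intros n E. destruct (bad_int q mu nu rho m n hq hr E) as [_ [k [hk [k1 k2]]]].
    fold Q M D in k1, k2.
    assert (Hn : (powerRZ Q k - D)/M <= INR n < powerRZ Q k / M).
    { split.
      - apply Rmult_le_reg_r with M; auto. unfold Rdiv. rewrite Rmult_assoc, Rinv_l by lra. lra.
      - apply Rmult_lt_reg_r with M; auto. unfold Rdiv. rewrite Rmult_assoc, Rinv_l by lra. lra. }
    rewrite <- inI_spec in Hn.
    unfold k0; destruct hk as [ -> | [ -> | -> ] ]; auto. }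
  rewrite !plus_INR.
  pose proof (cnt (powerRZ Q (k0-1))). pose proof (cnt (powerRZ Q k0)). pose proof (cnt (powerRZ Q (k0+1))).
  assert (D / M <= D * Q / powerRZ Q (Z.of_nat mu)).
  { assert (EA : powerRZ Q (Z.of_nat mu) = powerRZ Q (Z.of_nat mu - 1) * Q).
    { replace (Z.of_nat mu) with ((Z.of_nat mu - 1) + 1)%Z at 1 by lia.
      rewrite powerRZ_add by lra. simpl. ring. }
    rewrite EA. set (p := powerRZ Q (Z.of_nat mu - 1)) in *.
    assert (0 < p) by (apply powerRZ_lt; lra).
    replace (D * Q / (p * Q)) with (D / p) by (field; lra).
    unfold Rdiv. apply Rmult_le_compat_l; auto. apply Rinv_le_contravar; auto. }
  lra.
Qed.

Theorem mainTheorem8 (q : nat) (hq : (2 <= q)%nat) :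
  exists C : R, 0 < C /\
    forall mu nu rho : nat, (2 * Z.of_nat rho <= Z.of_nat nu - 1)%Z ->
      INR (badcount q mu nu rho) <=
        C * ln (INR q ^ (mu + nu)) *
          powerRZ (INR q) (Z.of_nat (mu + nu) - Z.of_nat rho).
Proof.
  pose proof (INRq2 q hq) as HQ. set (Q := INR q) in *.
  assert (HL : 0 < ln Q) by (rewrite <- ln_1; apply ln_increasing; lra).
  exists ((9 * Q + 3) / ln Q). split.
  { unfold Rdiv; apply Rmult_lt_0_compat; [lra|]; apply Rinv_0_lt_compat; auto. }
  intros mu nu rho hr.
  set (P := powerRZ Q (Z.of_nat (mu + nu) - Z.of_nat rho)).
  set (A := powerRZ Q (Z.of_nat mu)).
  set (D := Dq q mu nu rho).
  assert (HA : 0 < A) by (apply powerRZ_lt; lra).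
  unfold badcount. eapply Rle_trans.
  { apply (prod_bound _ _ _ (3 * (D * Q / A + 1))). intros m. simpl.
    apply per_m; auto. }
  rewrite length_seq, pow_INR. fold Q. rewrite pow_powerRZ. fold A.
  assert (Hpw : forall a b, (a <= b)%Z -> powerRZ Q a <= powerRZ Q b) by (intros; apply pw_mono; [lra|auto]).
  assert (AP : A <= P) by (unfold A, P; apply Hpw; lia).
  assert (DP : D <= 3 * P).
  { unfold D, Dq. fold Q. rewrite !pw_mul by lra.
    assert (E1 : powerRZ Q (Z.of_nat mu - Z.of_nat rho + Z.of_nat nu) = P)
      by (unfold P; f_equal; lia).
    assert (powerRZ Q (Z.of_nat rho + Z.of_nat mu) <= P) by (apply Hpw; lia).
    assert (powerRZ Q (Z.of_nat mu - Z.of_nat rho + Z.of_nat rho) <= P) by (apply Hpw; lia).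
    lra. }
  replace (A * (3 * (D * Q / A + 1))) with (3 * D * Q + 3 * A) by (field; lra).
  rewrite ln_pow by lra.
  assert (Hmn : 1 <= INR (mu + nu)) by (replace 1 with (INR 1) by reflexivity; apply le_INR; lia).
  replace ((9 * Q + 3) / ln Q * (INR (mu + nu) * ln Q) * P) with ((9*Q+3) * INR (mu+nu) * P)
    by (field; lra).
  assert (0 < P) by (apply powerRZ_lt; lra).
  assert (0 <= D) by (apply Dq_nonneg; auto).
  assert ((9*Q+3) * P <= (9*Q+3) * INR (mu+nu) * P).
  { rewrite Rmult_assoc. apply Rmult_le_compat_l; [lra|]. nra. }
  nra.
Qed.
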